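(* In the single-authority continuum model described in the context, fix a state $\omega$. An allocation $\mu$ is implemented by a quota policy if and only if it is also implemented by a monotone priority policy.
   Context: An authority allocates a resource of measure $q\in(0,1)$ to a continuum of agents with types $\theta=(s,m)\in[0,1]\times\mathcal M$ ($\mathcal M$ finite), whose measure in state $\omega$ has a density $f_\omega$. Allocations are measurable $\mu:\Theta\to\{0,1\}$ (equality of allocations understood up to measure zero). A priority policy $P$ assigns each type $(s,m)$ a priority $P(s,m)$; the priority mechanism allocates the resource in order of priorities until measure $q$ is allocated, ties broken uniformly at random. $P$ is monotone if $P(s,m)$ is strictly increasing in $s$ for each $m$. A quota policy $(Q,D)$ reserves measure $Q_m$ for group $m$, with $Q_R=q-\sum_mQ_m$ open to all, and a bijection (precedence order) $D:\mathcal M\cup\{R\}\to\{1,\dots,|\mathcal M|+1\}$; the quota mechanism allocates measure $Q_{D^{-1}(k)}$ to agents of group $D^{-1}(k)$ (to all agents if $D^{-1}(k)=R$) in ascending order of $k$, in descending order of score within each round; if there are too few agents of a group to fill its quota, the residual capacity is allocated in a final round open to all. *)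

(* Defs.v *)
From HB Require Import structures.
From mathcomp Require Import all_boot all_order all_algebra.
From mathcomp Require Import all_classical all_reals all_analysis.
Set Implicit Arguments. Unset Strict Implicit. Unset Printing Implicit Defensive.
Import Order.TTheory GRing.Theory Num.Theory.
Local Open Scope classical_set_scope.
Local Open Scope ring_scope.

Section Model.
Variables (R : realType) (M : finType).

Definition Theta : set (R * M) := [set th | 0 <= th.1 <= 1].

(* Measure of a set of types under the (fixed-state) density f. *)
Definition mass (f : R -> M -> R) (S : set (R * M)) : \bar R :=
  (\sum_(m : M) \int[lebesgue_measure]_(s in [set s : R | (0 <= s <= 1)%R /\ S (s, m)])
      (f s m)%:E)%E.

Definition total_mass (f : R -> M -> R) : \bar R := mass f Theta.

(* phi th = probability that type th receives the resource when the
   resource is allocated in order of priorities P until measure q is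
   allocated, ties broken uniformly at random. *)
Definition priority_outcome (f : R -> M -> R) (q : R) (P : R * M -> R)
    (phi : R * M -> R) : Prop :=
  [/\ (forall th, Theta th -> 0 <= phi th <= 1),
      (* uniform random tie-breaking: equal priority, equal chance *)
      (forall th th', Theta th -> Theta th' -> P th = P th' -> phi th = phi th'),
      (* allocation in order of priorities *)
      (forall th th', Theta th -> Theta th' -> P th' < P th -> 0 < phi th' ->
          phi th = 1) &
      (* measure q is allocated (or everybody, if fewer than q agents) *)
      (\sum_(m : M) \int[lebesgue_measure]_(s in `[0%R, 1%R]) (phi (s, m) * f s m)%R%:E)%E
         = mine q%:E (total_mass f)].

Definition priority_implements (f : R -> M -> R) (q : R) (P : R * M -> R)
    (mu : R * M -> bool) : Prop :=
  exists phi, priority_outcome f q P phi /\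
    mass f [set th | Theta th /\ phi th <> (mu th)%:R] = 0%E.

Definition monotone_priority (P : R * M -> R) : Prop :=
  forall m s s', 0 <= s -> s < s' -> s' <= 1 -> P (s, m) < P (s', m).

(* None stands for the open category R. *)
Definition in_group (o : option M) (th : R * M) : Prop :=
  match o with None => True | Some m => th.2 = m end.

Definition capacity (q : R) (Q : M -> R) (o : option M) : R :=
  match o with None => q - \sum_(m : M) Q m | Some m => Q m end.

Definition quota_policy (q : R) (Q : M -> R) : Prop :=
  (forall m, 0 <= Q m) /\ \sum_(m : M) Q m <= q.

(* One round: measure x is allocated to the agents of pool, in descending
   order of score (or all of pool if it has measure less than x). *)
Definition round (f : R -> M -> R) (pool : set (R * M)) (x : \bar R)
    (B : set (R * M)) : Prop :=
  [/\ B `<=` pool,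
      (forall b r, B b -> pool r -> ~ B r -> r.1 <= b.1) &
      mass f B = mine x (mass f pool)].

(* A run of the quota mechanism with precedence order D: A k is the set of
   agents allocated before round k (rounds 0, ..., #|M|), res k the residual
   capacity accumulated so far; Bfin is allocated in the final open round. *)
Definition quota_run (f : R -> M -> R) (q : R) (Q : M -> R)
    (D : option M -> 'I_(#|M|.+1)) (A : nat -> set (R * M))
    (res : nat -> \bar R) (Bfin : set (R * M)) : Prop :=
  [/\ A 0%N = set0, res 0%N = 0%E,
      (forall (k : 'I_(#|M|.+1)) (o : option M), D o = k ->
         exists B, [/\ round f [set th | Theta th /\ ~ A k th /\ in_group o th]
                               (capacity q Q o)%:E B,
                       A k.+1 = A k `|` B &
                       res k.+1 = (res k + (capacity q Q o)%:E - mass f B)%E]) &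
      round f [set th | Theta th /\ ~ A #|M|.+1 th] (res #|M|.+1) Bfin].

Definition quota_implements (f : R -> M -> R) (q : R) (Q : M -> R)
    (D : option M -> 'I_(#|M|.+1)) (mu : R * M -> bool) : Prop :=
  exists A res Bfin, quota_run f q Q D A res Bfin /\
    mass f [set th | Theta th /\ ~ ((A #|M|.+1 `|` Bfin) th <-> mu th)] = 0%E.

End Model.

(* Main.v *)
Require Import Defs.
From HB Require Import structures.
From mathcomp Require Import all_boot all_order all_algebra.
From mathcomp Require Import all_classical all_reals all_analysis.
From mathcomp Require Import measurable_realfun.
From mathcomp Require Import ring lra.
Import Order.TTheory GRing.Theory Num.Theory.
Local Open Scope classical_set_scope.
Local Open Scope ring_scope.

Section Helpers.
Variables (R : realType).
Local Open Scope ereal_scope.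

Lemma int_le_gen (D1 D2 : set R) (g h : R -> \bar R) :
  (forall x, 0 <= (g \_ D1) x) -> (forall x, (g \_ D1) x <= (h \_ D2) x) ->
  \int[lebesgue_measure]_(x in D1) g x <= \int[lebesgue_measure]_(x in D2) h x.
Proof.
move=> g0 gh.
have h0 : forall x, 0 <= (h \_ D2) x by move=> x; exact: le_trans (g0 x) (gh x).
rewrite ge0_integralE; last first.
  by move=> x Dx; move: (g0 x); rewrite /patch mem_set.
rewrite ge0_integralE; last first.
  by move=> x Dx; move: (h0 x); rewrite /patch mem_set.
apply: ereal_sup_le => _ [k /= hk <-]; exists k => //= x.
exact: le_trans (hk x) (gh x).
Qed.
End Helpers.

Lemma sum_option (R : realDomainType) (M : finType) (F : option M -> R) :
  (\sum_(o : option M) F o = F None + \sum_(m : M) F (Some m))%R.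
Proof.
rewrite (bigD1 None) //=; congr (_ + _)%R.
rewrite (reindex_omap Some (fun o => o)) //=; last by case.
by apply: eq_bigl => m; rewrite eqxx.
Qed.

Definition Dq (M : finType) (o : option M) : 'I_(#|M|.+1) :=
  match o with Some m => widen_ord (leqnSn _) (enum_rank m) | None => ord_max end.

Lemma Dq_bij (M : finType) : bijective (@Dq M).
Proof.
pose g := fun k : 'I_(#|M|.+1) =>
  match (insub (val k) : option 'I_#|M|) with Some i => Some (enum_val i) | None => None end.
exists g.
  case => [m|] /=; rewrite /g /=.
    by rewrite (valK (enum_rank m)) enum_rankK.
  by rewrite insubF // ltnn.
move=> k; rewrite /g; case: insubP => [i ilt ival|nlt] /=.
  by apply: val_inj; rewrite /= enum_valK ival.
apply: val_inj => /=; move: (ltn_ord k) nlt; rewrite ltnS leq_eqVlt.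
by case/orP => [/eqP ->|->].
Qed.

Section Main.
Variables (R : realType) (M : finType) (f : R -> M -> R).
Hypothesis f0 : forall s m, (0 <= s <= 1)%R -> (0 <= f s m)%R.
Hypothesis fint : forall m, lebesgue_measure.-integrable `[0, 1] (fun s => (f s m)%:E).
Local Open Scope ereal_scope.

Definition sl (S : set (R * M)) m := [set s : R | (0 <= s <= 1)%R /\ S (s, m)].
Definition I01 := [set s : R | (0 <= s <= 1)%R].

Lemma massE S : mass f S = \sum_(m : M) \int[lebesgue_measure]_(s in sl S m) (f s m)%:E.
Proof. by []. Qed.

Lemma I01E : I01 = [set` `[0%R, 1%R]].
Proof. by apply/funext => x; rewrite /I01 /= in_itv. Qed.

Lemma mf m : measurable_fun I01 (fun s : R => ((f s m)%:E : \bar R)).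
Proof. by rewrite I01E; case/integrableP: (fint m). Qed.

Lemma int_fin m : \int[lebesgue_measure]_(s in I01) (f s m)%:E \is a fin_num.
Proof. rewrite I01E; exact: integrable_fin_num. Qed.

Lemma sl_sub S m : sl S m `<=` I01.
Proof. by move=> x []. Qed.

Lemma int_ge0 (X : set R) m : X `<=` I01 -> 0 <= \int[lebesgue_measure]_(s in X) (f s m)%:E.
Proof. by move=> XI; apply: integral_ge0 => x /XI /f0; rewrite lee_fin. Qed.

Lemma int_le (X Y : set R) m : X `<=` Y -> Y `<=` I01 ->
  \int[lebesgue_measure]_(s in X) (f s m)%:E <= \int[lebesgue_measure]_(s in Y) (f s m)%:E.
Proof.
move=> XY YI; apply: int_le_gen => x; rewrite /patch.
  by case: ifPn => // /set_mem /XY /YI /f0; rewrite lee_fin.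
case: ifPn => [/set_mem xX|_].
  by rewrite (mem_set (XY _ xX)).
by case: ifPn => // /set_mem /YI /f0; rewrite lee_fin.
Qed.

Lemma mass_ge0 S : 0 <= mass f S.
Proof. by rewrite massE; apply: sume_ge0 => m _; apply: int_ge0; exact: sl_sub. Qed.

Lemma mass_le S1 S2 : (forall m, sl S1 m `<=` sl S2 m) -> mass f S1 <= mass f S2.
Proof. by move=> h; rewrite !massE; apply: lee_sum => m _; apply: int_le => //; exact: sl_sub. Qed.

Lemma sl_Theta m : sl (@Theta R M) m = I01.
Proof. by apply/funext => x; apply/propext; rewrite /sl /Theta /I01 /=; split => [[]|]. Qed.

Lemma total_fin : total_mass f \is a fin_num.
Proof.
rewrite /total_mass massE; under eq_bigr do rewrite sl_Theta.
by apply/sum_fin_numP => m _ _; exact: int_fin.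
Qed.

Lemma mass_fin S : mass f S \is a fin_num.
Proof.
have h : mass f S <= total_mass f.
  by apply: mass_le => m; rewrite sl_Theta; exact: sl_sub.
move: total_fin; rewrite !fin_numElt => /andP[_ t].
by rewrite (lt_le_trans _ (mass_ge0 S)) ?ltNyr //= (le_lt_trans h t).
Qed.

Lemma mass_setU S1 S2 : (forall m, measurable (sl S1 m)) -> (forall m, measurable (sl S2 m)) ->
  (forall m, [disjoint sl S1 m & sl S2 m]) ->
  mass f (S1 `|` S2) = mass f S1 + mass f S2.
Proof.
move=> m1 m2 d; rewrite !massE -big_split /=; apply: eq_bigr => m _.
have -> : sl (S1 `|` S2) m = sl S1 m `|` sl S2 m.
  by apply/funext => x; apply/propext; rewrite /sl /=; split => [[h [a|a]]|[[h a]|[h a]]]; tauto.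
rewrite ge0_integral_setU //.
- exact: m1.
- exact: m2.
- apply: (measurable_funS (E := I01)).
  + by rewrite I01E; exact: measurable_itv.
  + by move=> x [] [].
  + exact: mf.
- by move=> x [] [] /f0; rewrite lee_fin.
Qed.

Definition upc (S : set (R * M)) :=
  forall m s s', S (s, m) -> (s < s')%R -> (s' <= 1)%R -> S (s', m).

Lemma upc_meas S m : upc S -> measurable (sl S m).
Proof.
move=> u; apply: is_interval_measurable => x y [hx Sx] [hy Sy] z /andP[xz zy].
have z01 : (0 <= z <= 1)%R.
  case/andP: hx => hx0 _; case/andP: hy => _ hy1.
  by rewrite (le_trans hx0 xz) (le_trans zy hy1).
split => //; case: (eqVneq x z) => [<- //|xnz].
apply: (u m x z Sx); first by rewrite lt_neqAle xnz xz.
by case/andP: z01.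
Qed.


Lemma mass_set0 : mass f set0 = 0.
Proof.
rewrite massE big1 // => m _.
have -> : sl set0 m = set0 by apply/funext => x; apply/propext; split => [[]|].
exact: integral_set0.
Qed.

Lemma upc_round (A B pool : set (R * M)) : upc A -> A `<=` (@Theta R M) ->
  pool `<=` (@Theta R M) `&` ~` A ->
  (forall x y, pool x -> (@Theta R M) y -> y.2 = x.2 -> ~ A y -> pool y) ->
  B `<=` pool -> (forall b r, B b -> pool r -> ~ B r -> (r.1 <= b.1)%R) ->
  upc (A `|` B).
Proof.
move=> uA AT pT pcl Bp ord m s s' [As|Bs] ss' s'1; first by left; exact: uA As ss' s'1.
have [Ay|nAy] := pselect (A (s', m)); first by left.
right; have ps := Bp _ Bs; have [/andP[s0 _] _] := pT _ ps.
have Ty : @Theta R M (s', m).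
  by rewrite /Theta /= s'1 andbT; exact: le_trans s0 (ltW ss').
have py : pool (s', m) := pcl (s, m) (s', m) ps Ty erefl nAy.
have [//|nB] := pselect (B (s', m)).
by have := ord _ _ Bs py nB; rewrite /= leNgt ss'.
Qed.

Lemma sl_setD S1 S2 m : sl (S1 `\` S2) m = sl S1 m `\` sl S2 m.
Proof.
apply/funext => x; apply/propext; rewrite /sl /=; split.
  by move=> [h [a b]]; split => // -[].
by move=> [[h a] b]; split => //; split => // c; apply: b.
Qed.

Lemma mass_setU2 S1 S2 : upc S1 -> upc (S1 `|` S2) -> (forall x, S1 x -> S2 x -> False) ->
  mass f (S1 `|` S2) = mass f S1 + mass f S2.
Proof.
move=> u1 u12 d.
have eS2 : forall m, sl S2 m = sl (S1 `|` S2) m `\` sl S1 m.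
  move=> m; rewrite -sl_setD; apply/funext => x; apply/propext; rewrite /sl /=.
  split; first by move=> [h a]; split => //; split; [right|move=> /d; apply].
  by move=> [h [[a|a] b]].
apply: mass_setU.
- by move=> m; exact: upc_meas.
- by move=> m; rewrite eS2; apply: measurableD; exact: upc_meas.
- move=> m; rewrite eS2 disj_set2E; apply/eqP; apply/funext => x; apply/propext.
  by split => // -[a [_ b]].
Qed.


Lemma dir1 (q : R) (Q : M -> R) (D : option M -> 'I_(#|M|.+1)) (mu : R * M -> bool) :
  bijective D -> quota_implements f q Q D mu ->
  exists P, monotone_priority P /\ priority_implements f q P mu.
Proof.
move=> [g Dg gD] [A [res [Bfin [[A0 res0 rounds final] hmu]]]].
have UP : forall k, (k <= #|M|.+1)%N -> upc (A k) /\ A k `<=` @Theta R M.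
  elim=> [_|k IH hk]; first by rewrite A0; split => // m s s' [].
  have [u AT] := IH (ltnW hk).
  have [B [[Bp ord mB] Ak1 _]] := rounds (Ordinal hk) (g (Ordinal hk)) (gD _).
  rewrite /= in Ak1; rewrite Ak1; split.
    apply: (upc_round _ _ _ u AT _ _ Bp ord).
    - by move=> x [Tx [nAx _]]; split.
    - move=> x y [Tx [nAx gx]] Ty e nAy; split => //; split => //.
      by move: gx; case: (g _) => //= m; rewrite e.
  by move=> x [/AT|/Bp [Tx _]].
pose cap := capacity q Q.
pose S k := (\sum_(o : option M | (D o < k)%N) cap o)%R.
have MA : forall k, (k <= #|M|.+1)%N -> res k = (S k - fine (mass f (A k)))%:E.
  elim=> [_|k IH hk].
    by rewrite res0 A0 mass_set0 /S big_pred0 //= subr0.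
  have [B [[Bp ord mB] Ak1 rk1]] := rounds (Ordinal hk) (g (Ordinal hk)) (gD _).
  rewrite /= in Ak1 rk1.
  rewrite rk1 IH ?(ltnW hk) //.
  have [u1 _] := UP _ hk; have [u0 _] := UP _ (ltnW hk).
  rewrite Ak1 in u1 *.
  rewrite mass_setU2 //; last by move=> x Ax /Bp [_ [nA _]].
  rewrite fineD ?mass_fin //.
  have -> : S k.+1 = (S k + cap (g (Ordinal hk)))%R.
    rewrite /S (bigD1 (g (Ordinal hk))) /=; last by rewrite gD /=.
    rewrite addrC; congr (_ + _)%R; apply: eq_bigl => o.
    have [->|ne] := eqVneq o (g (Ordinal hk)); first by rewrite /= andbF gD /= ltnn.
    rewrite /= andbT ltnS leq_eqVlt; case: eqP => //= e; move/eqP: ne; case.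
    by rewrite -(Dg o); congr g; apply: val_inj.
  rewrite -[mass f B](fineK (mass_fin B)) -!EFinD; congr EFin; rewrite /cap; lra.
have [uN ATN] := UP _ (leqnn _).
have [Bp ord mB] := final.
pose pool := [set th | @Theta R M th /\ ~ A #|M|.+1 th].
pose U := A #|M|.+1 `|` Bfin.
have uU : upc U.
  apply: (upc_round _ _ _ uN ATN _ _ Bp ord).
  - by move=> x [Tx nAx]; split.
  - by move=> x y [Tx nAx] Ty e nAy; split.
have SN : S #|M|.+1 = q.
  rewrite /S (eq_bigl xpredT); last by move=> o; rewrite ltn_ord.
  rewrite sum_option /cap /=; lra.
have Tot : total_mass f = mass f (A #|M|.+1) + mass f pool.
  rewrite /total_mass.
  have -> : @Theta R M = A #|M|.+1 `|` pool.
    apply/funext => x; apply/propext; split.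
      by move=> Tx; have [?|?] := pselect (A #|M|.+1 x); [left|right].
    by move=> [/ATN|[]].
  apply: mass_setU2 => //; last by move=> x Ax [_].
  move=> m s s' [As|[Ts nAs]] ss' s'1.
    by left; exact: uN As ss' s'1.
  have [?|?] := pselect (A #|M|.+1 (s', m)); [left|right] => //; split => //.
  case/andP: Ts => /= s0 _; rewrite /Theta /= s'1 andbT.
  exact: le_trans s0 (ltW ss').
have mU : mass f U = mine q%:E (total_mass f).
  rewrite /U mass_setU2 //; last by move=> x Ax /Bp [_ nA].
  rewrite mB (MA _ (leqnn _)) SN Tot.
  rewrite -[mass f pool](fineK (mass_fin pool)) -[mass f (A _)](fineK (mass_fin _)).
  rewrite -!EFin_min -!EFinD; congr EFin.
  rewrite addr_minr /=; congr Order.min; lra.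
pose P := fun th : R * M => (th.1 + (if `[< U th >] then 2 else 0))%R.
pose phi := fun th : R * M => (if `[< U th >] then 1 else 0 : R)%R.
exists P; split.
  move=> m s s' s0 ss' s'1; rewrite /P /=.
  case: (asboolP (U (s, m))) => Us.
    by rewrite asboolT; [lra|exact: uU Us ss' s'1].
  by case: asboolP => _; lra.
exists phi; split; last first.
  rewrite -hmu; congr (mass f _); apply/funext => th; apply/propext; rewrite /phi.
  split => -[Tth h]; split => //; move: h.
    case: asboolP => Uth; case: (mu th) => /= h.
    - by exfalso; apply: h.
    - by move=> [/(_ Uth)].
    - by move=> [_ /(_ isT)].
    - by exfalso; apply: h.
  case: asboolP => Uth; case: (mu th) => /= h.
  - by exfalso; apply: h.
  - by move/eqP; rewrite oner_eq0.
  - by move/eqP; rewrite eq_sym oner_eq0.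
  - by exfalso; apply: h; split.
split.
- by move=> th _; rewrite /phi; case: asboolP => _; rewrite ?lexx ?ler01.
- move=> th th' /andP[t0 t1] /andP[t0' t1']; rewrite /P /phi.
  by case: asboolP; case: asboolP => // *; lra.
- move=> th th' /andP[t0 t1] /andP[t0' t1']; rewrite /P /phi.
  by case: asboolP; case: asboolP => // *; lra.
- rewrite -mU (massE U); apply: eq_bigr => m _.
  rewrite integral_mkcond [RHS]integral_mkcond; apply: eq_integral => s _.
  rewrite /patch /phi /sl.
  case: (asboolP (U (s, m))) => Us.
    rewrite mul1r; congr (if _ then _ else _); apply/idP/idP => /set_mem h; apply/mem_set.
      by split => //; move: h; rewrite /= in_itv.
    by case: h => h _; rewrite /= in_itv.
  rewrite mul0r; case: ifP => _; case: ifP => //; by move=> /set_mem [].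
Qed.


Lemma upc_Theta : upc (@Theta R M).
Proof.
move=> m s s' /andP[/= s0 _] ss' s'1; rewrite /Theta /= s'1 andbT.
exact: le_trans s0 (ltW ss').
Qed.

Lemma int_fin_sub (X : set R) m : X `<=` I01 ->
  \int[lebesgue_measure]_(s in X) (f s m)%:E \is a fin_num.
Proof.
move=> XI; have h := int_le X I01 m XI (@subset_refl _ I01).
move: (int_fin m); rewrite !fin_numElt => /andP[_ t].
by rewrite (lt_le_trans _ (int_ge0 X m XI)) ?ltNyr //= (le_lt_trans h t).
Qed.

Lemma mass_group (V : set (R * M)) m :
  mass f [set th | V th /\ th.2 = m] = \int[lebesgue_measure]_(s in sl V m) (f s m)%:E.
Proof.
rewrite massE (bigD1 m) //= big1 ?adde0.
  congr integral; apply/funext => s; apply/propext; rewrite /sl /=.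
  by split => [[h [a _]]|[h a]].
move=> m' ne; have -> : sl [set th | V th /\ th.2 = m] m' = set0.
  apply/funext => s; apply/propext; split => // -[_ [_ /= e]].
  by move: ne; rewrite e eqxx.
exact: integral_set0.
Qed.

Lemma dir2 (q : R) (mu : R * M -> bool) (P : R * M -> R) :
  monotone_priority P -> priority_implements f q P mu ->
  exists (Q : M -> R) (D : option M -> 'I_(#|M|.+1)),
      [/\ quota_policy q Q, bijective D & quota_implements f q Q D mu].
Proof.
move=> Pm [phi [[h01 htie hord hint] hnull]].
pose V := [set th | @Theta R M th /\ phi th = 1%R].
have uV : upc V.
  move=> m s s' [Ts p1] ss' s'1.
  have Ts' : @Theta R M (s', m) by exact: upc_Theta Ts ss' s'1.
  split => //; apply: (hord _ (s, m)) => //; last by rewrite p1 ltr01.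
  by apply: Pm => //; case/andP: Ts.
pose W := [set th | @Theta R M th /\ (0 < phi th)%R].
have uW : upc W.
  move=> m s s' [Ts p1] ss' s'1.
  have Ts' : @Theta R M (s', m) by exact: upc_Theta Ts ss' s'1.
  split => //; rewrite (hord _ (s, m)) ?ltr01 //.
  by apply: Pm => //; case/andP: Ts.
have VW : V `<=` W by move=> th [T p1]; split => //; rewrite p1 ltr01.
have mVW : mass f W = mass f V.
  have -> : W = V `|` (W `\` V).
    apply/funext => th; apply/propext; split; last by case => [/VW|[]].
    by move=> Wth; have [?|?] := pselect (V th); [left|right].
  rewrite mass_setU2 //; last 2 first.
  - by rewrite setDUK.
  - by move=> th a [_ b].
  rewrite [mass f (W `\` V)]massE big1 ?adde0 // => m _.
  have [[s0 hs0]|none] := pselect (exists s, sl (W `\` V) m s).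
    apply: (@integral_Sset1 _ _ _ s0) => s hs.
    case: hs0 => hs01 [[Ts0 p0] nV0]; case: hs => hs1 [[Ts ps] nV].
    have [lt|gt|//] := ltgtP s s0.
    - exfalso; apply: nV0; split => //; apply: (hord _ (s, m)) => //.
      by apply: Pm => //; [case/andP: Ts|case/andP: Ts0].
    - exfalso; apply: nV; split => //; apply: (hord _ (s0, m)) => //.
      by apply: Pm => //; [case/andP: Ts0|case/andP: Ts].
  have -> : sl (W `\` V) m = set0.
    by apply/funext => s; apply/propext; split => // h; apply: none; exists s.
  exact: integral_set0.
have sumV : \sum_(m : M) \int[lebesgue_measure]_(s in `[0%R, 1%R]) (phi (s, m) * f s m)%:E
    = mass f V.
  apply/eqP; rewrite eq_le; apply/andP; split; last first.
    rewrite massE; apply: lee_sum => m _; apply: int_le_gen => x; rewrite /patch.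
      case: ifPn => // /set_mem [/f0 fx _]; by rewrite lee_fin.
    case: ifPn => [/set_mem [x01 [Tx p1]]|_].
      by rewrite mem_set ?p1 ?mul1r //= in_itv.
    case: ifPn => // /set_mem; rewrite /= in_itv /= => x01.
    by rewrite lee_fin mulr_ge0 ?f0 //; case/andP: (h01 (x, m) x01).
  rewrite -mVW massE; apply: lee_sum => m _; apply: int_le_gen => x; rewrite /patch.
    case: ifPn => // /set_mem; rewrite /= in_itv /= => x01.
    by rewrite lee_fin mulr_ge0 ?f0 //; case/andP: (h01 (x, m) x01).
  case: ifPn => [/set_mem|_]; last first.
    by case: ifPn => // /set_mem [/f0]; rewrite lee_fin.
  rewrite /= in_itv /= => x01.
  have [p0|pp] := lerP (phi (x, m)) 0%R.
    have -> : phi (x, m) = 0%R by apply/eqP; rewrite eq_le p0; case/andP: (h01 (x, m) x01).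
    by rewrite mul0r; case: ifPn => // /set_mem [/f0]; rewrite lee_fin.
  rewrite mem_set; last by split => //; split.
  rewrite lee_fin ler_piMl ?f0 //; by case/andP: (h01 (x, m) x01).
have mV : mass f V = mine q%:E (total_mass f) by rewrite -sumV.
pose Q := fun m => fine (\int[lebesgue_measure]_(s in sl V m) (f s m)%:E).
have QE : forall m, (Q m)%:E = \int[lebesgue_measure]_(s in sl V m) (f s m)%:E.
  by move=> m; rewrite fineK //; apply: int_fin_sub; exact: sl_sub.
have mVQ : mass f V = (\sum_(m : M) Q m)%:E.
  by rewrite -sumEFin massE; apply: eq_bigr => m _; rewrite QE.
pose pool0 := [set th | @Theta R M th /\ ~ V th].
have Tot : total_mass f = mass f V + mass f pool0.
  rewrite /total_mass.
  have -> : @Theta R M = V `|` pool0.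
    apply/funext => x; apply/propext; split.
      by move=> Tx; have [?|?] := pselect (V x); [left|right].
    by move=> [[]|[]].
  apply: mass_setU2 => //; last by move=> x Vx [_].
  have <- : @Theta R M = V `|` pool0.
    apply/funext => x; apply/propext; split.
      by move=> Tx; have [?|?] := pselect (V x); [left|right].
    by move=> [[]|[]].
  exact: upc_Theta.
have e1 : (\sum_(m : M) Q m = Num.min q (fine (total_mass f)))%R.
  by apply: EFin_inj; rewrite -mVQ mV EFin_min fineK // total_fin.
have e2 : (fine (total_mass f) = fine (mass f V) + fine (mass f pool0))%R.
  by rewrite Tot fineD ?mass_fin.
have e3 : fine (mass f V) = (\sum_(m : M) Q m)%R by rewrite mVQ.
have w0 : (0 <= fine (mass f pool0))%R := fine_ge0 (mass_ge0 _).
have KEY : mine (capacity q Q None)%:E (mass f pool0) = 0.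
  rewrite -(fineK (mass_fin pool0)) -EFin_min /=.
  have -> : (0 : \bar R) = (0%R)%:E by [].
  congr EFin.
  have [qt|tq] := leP q (fine (total_mass f)).
    by rewrite e1 (min_l qt) subrr min_l.
  have w00 : fine (mass f pool0) = 0%R.
    by move: e2; rewrite e3 e1 (min_r (ltW tq)); lra.
  by rewrite w00 min_r // e1 (min_r (ltW tq)) subr_ge0 ltW.
exists Q, (@Dq M); split.
- split; first by move=> m; apply: fine_ge0; apply: int_ge0; exact: sl_sub.
  by rewrite e1 ge_min lexx.
- exact: Dq_bij.
pose A := fun k : nat => [set th | V th /\ (enum_rank th.2 < k)%N].
pose res := fun k : nat => if (k <= #|M|)%N then 0 else (capacity q Q None)%:E.
have AN : forall k, (#|M| <= k)%N -> A k = V.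
  move=> k hk; apply/funext => th; apply/propext; split => [[]//|Vth]; split => //.
  exact: leq_trans (ltn_ord _) hk.
have poolE : forall k, (#|M| <= k)%N ->
    [set th | @Theta R M th /\ ~ A k th /\ in_group None th] = pool0.
  move=> k hk; rewrite AN //; apply/funext => th; apply/propext; rewrite /pool0 /=.
  by split => [[? []]|[]].
exists A, res, set0; split; [split| ].
- apply/funext => th; apply/propext; split => // -[_]; by rewrite ltn0.
- by rewrite /res leq0n.
- move=> k [m|] Dok.
    have kE : (k : nat) = enum_rank m by rewrite -Dok.
    exists [set th | V th /\ th.2 = m]; split.
    + split.
      * move=> [s m'] [[Tth p1] /= e]; subst m'; split => //; split => //.
        by move=> [_]; rewrite /= kE ltnn.
      * move=> [sb mb] [sr mr] [[Tb pb] /= eb] [Tr [nAr /= gr]] nB; subst mb mr.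
        rewrite leNgt; apply/negP => lt; apply: nB; split => //; split => //.
        apply: (hord _ (sb, m)) => //; last by rewrite pb ltr01.
        by apply: Pm => //; [case/andP: Tb|case/andP: Tr].
      * rewrite mass_group -QE min_l // QE -mass_group; apply: mass_le => m' s [h [[Ts p1] e]].
        split => //; split => //; split => //.
        by move=> [_]; move: e => /= ->; rewrite kE ltnn.
    + apply/funext => -[s m']; apply/propext; rewrite /= kE; split.
        move=> [Vth]; rewrite ltnS leq_eqVlt => /orP[e|lt]; last by left.
        by right; split => //; apply: enum_rank_inj; apply: val_inj; apply/eqP.
      by case => [[Vth lt]|[Vth e]]; split => //; [rewrite ltnS ltnW|rewrite e ltnS].
    + have hk1 : (k.+1 <= #|M|)%N by rewrite kE.
      rewrite /res hk1 (ltnW hk1) mass_group -QE add0e subee //.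
  have kE : (k : nat) = #|M| by rewrite -Dok.
  exists set0; split.
  + split; [by move=> ? []|by move=> b r []|].
    by rewrite mass_set0 poolE ?kE // KEY.
  + by rewrite setU0 !AN // kE.
  + by rewrite /res kE ltnn leqnn mass_set0 add0e sube0.
- split; [by move=> ? []|by move=> b r []|].
  have -> : [set th | @Theta R M th /\ ~ A #|M|.+1 th] = pool0.
    by rewrite AN.
  by rewrite mass_set0 /res ltnn KEY.
apply/eqP; rewrite eq_le mass_ge0 andbT -hnull; apply: mass_le => m s [h [Ts nh]].
split => //; split => // e; apply: nh; rewrite AN // setU0.
move: e; case: (mu (s, m)) => /= e.
  by split => // _; split.
split => // -[_ p1]; move: e; rewrite p1 => /eqP; by rewrite oner_eq0.
Qed.

End Main.

Theorem proposition13 (R : realType) (M : finType) (f : R -> M -> R) (q : R)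
    (mu : R * M -> bool) :
  (forall s m, 0 <= s <= 1 -> 0 <= f s m) ->
  (forall m, lebesgue_measure.-integrable `[0, 1] (fun s => (f s m)%:E)) ->
  0 < q < 1 ->
  (forall m, measurable [set s : R | mu (s, m)]) ->
  (exists (Q : M -> R) (D : option M -> 'I_(#|M|.+1)),
      [/\ quota_policy q Q, bijective D & quota_implements f q Q D mu])
  <->
  (exists P : R * M -> R, monotone_priority P /\ priority_implements f q P mu).
Proof.
move=> f0 fint _ _; split.
  move=> [Q [D [_ bD qi]]]; exact: (@dir1 R M f f0 fint q Q D mu bD qi).
move=> [P [Pm pi]]; exact: (@dir2 R M f f0 fint q mu P Pm pi).
Qed.
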